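(* For any connected non-complete graph $G$, $$\mu_t(G)\le n(G)-\gamma_c(G).$$
   Context: All graphs are finite, simple and undirected; $n(G)$ denotes the order of $G$. The connected domination number $\gamma_c(G)$ is the minimum cardinality of a dominating set $D$ of $G$ such that the induced subgraph $G[D]$ is connected. Let $G$ be a connected graph and $X\subseteq V(G)$. Two vertices $x,y\in V(G)$ are $X$-visible if there exists a shortest $x,y$-path in $G$ none of whose internal vertices (i.e., vertices other than $x$ and $y$) belongs to $X$. The set $X$ is a total mutual-visibility set of $G$ if every two vertices of $G$ are $X$-visible (the empty set is allowed). The total mutual-visibility number $\mu_t(G)$ is the maximum cardinality of a total mutual-visibility set of $G$. *)

(* Defs.v *)
From mathcomp Require Import all_boot.
From mathcomp Require Import boolp.
Set Implicit Arguments. Unset Strict Implicit. Unset Printing Implicit Defensive.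

Definition simple_graph (T : finType) (e : rel T) : Prop :=
  symmetric e /\ irreflexive e.

Definition connected_graph (T : finType) (e : rel T) : Prop :=
  forall x y : T, connect e x y.

Definition complete_graph (T : finType) (e : rel T) : Prop :=
  forall x y : T, x != y -> e x y.

(* A walk from x is the vertex list x :: p with consecutive vertices adjacent;
   its length is size p. *)
Definition is_walk (T : finType) (e : rel T) (x y : T) (p : seq T) : bool :=
  path e x p && (last x p == y).

Definition is_shortest (T : finType) (e : rel T) (x y : T) (p : seq T) : Prop :=
  is_walk e x y p /\ forall q, is_walk e x y q -> size p <= size q.

(* internal vertices of the walk x :: p (all except first and last) *)
Definition internal (T : Type) (p : seq T) : seq T := take (size p).-1 p.

Definition X_visible (T : finType) (e : rel T) (X : {set T}) (x y : T) : Prop :=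
  exists p, is_shortest e x y p /\ forall v, v \in internal p -> v \notin X.

Definition total_mutual_visibility (T : finType) (e : rel T) (X : {set T}) : Prop :=
  forall x y : T, X_visible e X x y.

Definition tmvb (T : finType) (e : rel T) (X : {set T}) : bool :=
  `[< total_mutual_visibility e X >].

Definition dominating (T : finType) (e : rel T) (D : {set T}) : bool :=
  [forall v, (v \in D) || [exists u in D, e v u]].

(* the induced subgraph G[D] is connected (the empty graph counts as connected
   here; irrelevant since D is dominating in a nonempty graph) *)
Definition induced_connected (T : finType) (e : rel T) (D : {set T}) : bool :=
  [forall u in D, forall v in D,
     connect [rel a b | [&& e a b, a \in D & b \in D]] u v].

Definition connected_dominating (T : finType) (e : rel T) (D : {set T}) : bool :=
  dominating e D && induced_connected e D.

(* connected domination number: minimum cardinality of a connected dominating set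
   (#|T| is a harmless default/upper bound: setT is connected dominating when G is connected) *)
Definition gamma_c (T : finType) (e : rel T) : nat :=
  \big[minn/#|T|]_(D : {set T} | connected_dominating e D) #|D|.

Definition mu_t (T : finType) (e : rel T) : nat :=
  \max_(X : {set T} | tmvb e X) #|X|.

(* Main.v *)
Require Import Defs.
From mathcomp Require Import all_boot.
From mathcomp Require Import boolp zify.

Lemma nonadj_internal (T : finType) (e : rel T) (X : {set T}) (x y : T) :
  total_mutual_visibility e X -> x != y -> ~~ e x y ->
  exists a, [/\ e x a & a \notin X].
Proof.
move=> H nxy nexy; have [p [[/andP [pp /eqP lp] _] Hi]] := H x y.
case: p pp lp Hi => [|a p'] /=; first by move=> _ E; rewrite E eqxx in nxy.
move=> /andP [ea _] lp Hi; exists a; split => //.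
case: p' lp Hi => [|b q] /=; first by move=> E; rewrite -E ea in nexy.
by move=> _ Hi; apply: Hi; rewrite /internal /= in_cons eqxx.
Qed.

Arguments nonadj_internal {T e X x y}.

Lemma path_in (T : finType) (e : rel T) (D : {set T}) (u : T) (p : seq T) :
  u \in D -> path e u p -> (forall v, v \in p -> v \in D) ->
  path [rel a b | [&& e a b, a \in D & b \in D]] u p.
Proof.
elim: p u => [|a p IH] u uD /=; first by [].
move=> /andP [ea pa] H.
have aD : a \in D by apply: H; rewrite in_cons eqxx.
rewrite ea uD aD /=; apply: IH => // v vp; by apply: H; rewrite in_cons vp orbT.
Qed.

Lemma bigmin_seq_le (I : eqType) (s : seq I) (P : pred I) (F : I -> nat) m i :
  i \in s -> P i -> \big[minn/m]_(j <- s | P j) F j <= F i.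
Proof.
elim: s => [|a s IH] //= ia Pi; rewrite big_cons.
move: ia; rewrite in_cons => /orP [/eqP <-|Hs]; first by rewrite Pi geq_minl.
case: (P a); last exact: IH.
by apply: leq_trans (geq_minr _ _) (IH Hs Pi).
Qed.

Theorem theorem2p4 (T : finType) (e : rel T) :
  simple_graph e -> connected_graph e -> ~ complete_graph e ->
  mu_t e <= #|T| - gamma_c e.
Proof.
move=> [esym eirr] _ ncomp.
have [x [y [nxy nexy]]] : exists x y, x != y /\ ~~ e x y.
  apply: contrapT => H; apply: ncomp => a b nab; apply: contrapT => nE.
  by apply: H; exists a, b; split => //; apply/negP.
apply/bigmax_leqP => X /asboolP HX.
have cd : connected_dominating e (~: X).
  apply/andP; split.
    apply/forallP => v; rewrite in_setC; case vX: (v \in X) => //=.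
    apply/existsP.
    have [/existsP [w /andP [nvw nevw]]|univ] := boolP [exists w, (v != w) && ~~ e v w].
      have [a [ea aX]] := nonadj_internal HX nvw nevw.
      by exists a; rewrite in_setC aX.
    have [a [ea aX]] := nonadj_internal HX nxy nexy.
    exists a; rewrite in_setC aX /=.
    have nva : v != a by apply/eqP => E; rewrite -E vX in aX.
    move/existsPn: univ => /(_ a); rewrite nva /= negbK //.
  apply/forallP => u; apply/implyP => uD; apply/forallP => w; apply/implyP => wD.
  have [p [[/andP [pp /eqP lp] _] Hi]] := HX u w.
  apply/connectP; exists p => //.
  apply: path_in => // v vp.
  move: vp Hi lp; case/lastP: p pp => [|q l] //= _.
  rewrite /internal size_rcons /= -cats1 take_size_cat // mem_cat in_cons in_nil orbF.
  rewrite last_cat /= => /orP [vq|/eqP ->] Hi.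
    by move=> _; rewrite in_setC; apply: Hi.
  by move=> ->.
have : gamma_c e <= #|~: X| by apply: bigmin_seq_le => //; exact: mem_index_enum.
rewrite cardsCs setCK => H.
have HT : #|X| <= #|T| by apply: max_card.
lia.
Qed.
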